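(* Let $m\ge2$ be an integer and let $A$ be a left brace with $A^{(3)}=A^{m+1}=\{0\}$. Let $a\in A$, and define $a_1=a$ and $a_{j+1}=a*a_j$ for $j\ge1$. Let $t=\sum_{i=1}^m t_ia_i$ with $t_i\in\mathbb{Z}$. Then the inverse of $t$ in the group $(A,\cdot)$ is \[t^{-1}=\sum_{j=1}^m\Bigl(-\sum_{k=0}^{j-1}\binom{-t_1}{k}t_{j-k}\Bigr)a_j.\]
   Context: A left brace $(A,+,\cdot)$ is a set $A$ with two binary operations such that $(A,+)$ is an abelian group, $(A,\cdot)$ is a group, and $a(b+c)=ab-a+ac$ for all $a,b,c\in A$. In a left brace, $a*b=-a+ab-b$. For subsets $L,M\subseteq A$, $L*M$ is the subgroup of $(A,+)$ generated by $\{l*m\mid l\in L,m\in M\}$. Set $A^{(1)}=A$, $A^{(r+1)}=A^{(r)}*A$, and $A^1=A$, $A^{r+1}=A*A^r$ for $r\ge1$. Generalised binomial coefficients: for $n\in\mathbb{Z}$ and integer $k\ge0$, $\binom{n}{0}=1$ and $\binom{n}{k}=\frac{n(n-1)\cdots(n-k+1)}{k!}$ for $k>0$. *)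

(* Defs.v *)
From mathcomp Require Import all_boot all_order all_algebra.
Set Implicit Arguments. Unset Strict Implicit. Unset Printing Implicit Defensive.
Import GRing.Theory Num.Theory.
Local Open Scope ring_scope.

(* A left brace: (A,+) is the abelian group of the zmodType A; (A,mul) is a
   group with identity [one] and inverse [inv]; plus the brace compatibility. *)
Definition is_left_brace (A : zmodType) (mul : A -> A -> A) (inv : A -> A)
  (one : A) : Prop :=
  [/\ (forall x y z, mul x (mul y z) = mul (mul x y) z),
      (forall x, mul one x = x /\ mul x one = x),
      (forall x, mul (inv x) x = one /\ mul x (inv x) = one) &
      (forall a b c, mul a (b + c) = mul a b - a + mul a c)].

Definition bstar (A : zmodType) (mul : A -> A -> A) (a b : A) : A :=
  - a + mul a b - b.

Definition addgen (A : zmodType) (S : A -> Prop) : A -> Prop :=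
  fun x => forall P : A -> Prop,
    P 0 -> (forall u v, P u -> P v -> P (u + v)) -> (forall u, P u -> P (- u)) ->
    (forall u, S u -> P u) -> P x.

Definition setstar (A : zmodType) (mul : A -> A -> A) (L M : A -> Prop) : A -> Prop :=
  addgen (fun x => exists l m, [/\ L l, M m & x = bstar mul l m]).

(* rser r = A^(r), lser r = A^r, for r >= 1 (index 0 is also A) *)
Fixpoint rser (A : zmodType) (mul : A -> A -> A) (r : nat) : A -> Prop :=
  match r with
  | 0 | 1 => fun _ => True
  | r'.+1 => setstar mul (rser mul r') (fun _ => True)
  end.
Fixpoint lser (A : zmodType) (mul : A -> A -> A) (r : nat) : A -> Prop :=
  match r with
  | 0 | 1 => fun _ => True
  | r'.+1 => setstar mul (fun _ => True) (lser mul r')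
  end.

(* a_1 = a, a_{j+1} = a * a_j  (for j >= 1) *)
Definition aseq (A : zmodType) (mul : A -> A -> A) (a : A) (j : nat) : A :=
  iter j.-1 (bstar mul a) a.

(* generalised binomial coefficient n(n-1)...(n-k+1)/k!  (exact division) *)
Definition gbinom (n : int) (k : nat) : int :=
  ((\prod_(i < k) (n - (i : nat)%:Z)) %/ (k`!)%:Z)%Z.

(* Main.v *)
Require Import Defs.
From mathcomp Require Import all_boot all_order all_algebra.
From mathcomp Require Import ring zify.
Import GRing.Theory Num.Theory.
Local Open Scope ring_scope.
Set Implicit Arguments. Unset Strict Implicit. Unset Printing Implicit Defensive.

Definition Pp (n : int) (k : nat) : int := \prod_(i < k) (n - (i : nat)%:Z).

Lemma Pp_step (n : int) (k : nat) :
  Pp (n + 1) k.+1 = Pp n k.+1 + k.+1%:Z * Pp n k.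
Proof.
rewrite /Pp big_ord_recl big_ord_recr /=.
rewrite (eq_bigr (fun i : 'I_k => n - (i : nat)%:Z)); last first.
  by move=> i _; rewrite /bump /= add1n intS opprD addrA addrK.
rewrite intS; ring.
Qed.

Lemma Pp0 k : Pp 0 k.+1 = 0.
Proof. by rewrite /Pp big_ord_recl /= subr0 mul0r. Qed.

Lemma Pp_dvd k n : ((k`!)%:Z %| Pp n k)%Z.
Proof.
elim: k n => [|k IH] n; first by rewrite fact0 dvd1z.
have Hd : forall n, ((k.+1`!)%:Z %| k.+1%:Z * Pp n k)%Z.
  by move=> n'; rewrite factS PoszM dvdz_mul.
elim/int_rec: n => [|n IHn|n IHn]; first by rewrite Pp0 dvdz0.
  by rewrite intS addrC Pp_step rpredD.
have := Pp_step (- n.+1%:Z) k.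
rewrite (_ : - n.+1%:Z + 1 = - n%:Z); last by rewrite intS opprD addrAC subrr add0r.
move=> E.
have -> : Pp (- n.+1%:Z) k.+1 = Pp (- n%:Z) k.+1 - k.+1%:Z * Pp (- n.+1%:Z) k.
  by rewrite E addrK.
by rewrite rpredB.
Qed.

Lemma gbinomK n k : gbinom n k * (k`!)%:Z = Pp n k.
Proof. by rewrite /gbinom divzK // Pp_dvd. Qed.

Lemma gbinom0 n : gbinom n 0 = 1.
Proof. by rewrite /gbinom big_ord0 fact0 divz1. Qed.

Lemma gbinom0S k : gbinom 0 k.+1 = 0.
Proof. by rewrite /gbinom -/(Pp 0 k.+1) Pp0 div0z. Qed.

Lemma gbinom_pascal n k : gbinom (n + 1) k.+1 = gbinom n k.+1 + gbinom n k.
Proof.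
have nz : (k.+1`!)%:Z != 0 by rewrite eqz_nat -lt0n fact_gt0.
apply: (mulIf nz).
rewrite mulrDl !gbinomK Pp_step factS PoszM mulrCA gbinomK.
by [].
Qed.

Definition lam (A : zmodType) (mul : A -> A -> A) (x y : A) : A := - x + mul x y.

Lemma mulx0 (A : zmodType) (mul : A -> A -> A) inv one :
  is_left_brace mul inv one -> forall x, mul x 0 = x.
Proof.
case=> _ _ _ D x; have := D x 0 0; rewrite addr0.
move/(congr1 (fun w => w - mul x 0)); rewrite addrK subrr => /eqP.
by rewrite eq_sym subr_eq0 => /eqP.
Qed.

Lemma one0 (A : zmodType) (mul : A -> A -> A) inv one :
  is_left_brace mul inv one -> one = 0.
Proof.
move=> HB; have := mulx0 HB one; case: HB => _ I _ _; by rewrite (I 0).1.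
Qed.

Lemma lamD (A : zmodType) (mul : A -> A -> A) inv one :
  is_left_brace mul inv one -> forall x y z, lam mul x (y + z) = lam mul x y + lam mul x z.
Proof.
case=> _ _ _ D x y z; rewrite /lam D.
by rewrite !addrA.
Qed.

Lemma lam0 (A : zmodType) (mul : A -> A -> A) inv one :
  is_left_brace mul inv one -> forall x, lam mul x 0 = 0.
Proof. by move=> HB x; rewrite /lam (mulx0 HB) addNr. Qed.

Lemma lamN (A : zmodType) (mul : A -> A -> A) inv one :
  is_left_brace mul inv one -> forall x y, lam mul x (- y) = - lam mul x y.
Proof.
move=> HB x y; apply/eqP; rewrite -subr_eq0 opprK -(lamD HB) addNr.
by rewrite (lam0 HB).
Qed.

Lemma lamZ (A : zmodType) (mul : A -> A -> A) inv one :
  is_left_brace mul inv one -> forall x y n, lam mul x (y *~ n) = lam mul x y *~ n.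
Proof.
move=> HB x y.
have P : forall k, lam mul x (y *+ k) = lam mul x y *+ k.
  elim=> [|k IH]; first by rewrite !mulr0n (lam0 HB).
  by rewrite !mulrS (lamD HB) IH.
case=> k; first exact: P.
by rewrite !NegzE !mulrNz (lamN HB) P.
Qed.

Lemma lam_sum (A : zmodType) (mul : A -> A -> A) inv one :
  is_left_brace mul inv one -> forall x (r : seq nat) (P : pred nat) (F : nat -> A),
  lam mul x (\sum_(i <- r | P i) F i) = \sum_(i <- r | P i) lam mul x (F i).
Proof.
move=> HB x r P F; apply: (big_morph (lam mul x)); [exact: (lamD HB x) | exact: (lam0 HB x)].
Qed.

Lemma lamM (A : zmodType) (mul : A -> A -> A) inv one :
  is_left_brace mul inv one -> forall x y z, lam mul (mul x y) z = lam mul x (lam mul y z).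
Proof.
move=> HB x y z; rewrite [lam mul y z]/lam (lamD HB) (lamN HB) /lam opprD opprK.
case: HB => As _ _ _; by rewrite As addrA [x - _]addrC addrK.
Qed.

Lemma lamK (A : zmodType) (mul : A -> A -> A) inv one :
  is_left_brace mul inv one -> forall p q, (forall z, lam mul q z = z) ->
  forall z, lam mul (p + q) z = lam mul p z.
Proof.
move=> HB p q Hq z.
have E : mul q p = p + q by have H := Hq p; rewrite /lam in H; rewrite -{2}H addrAC addNr add0r.
by rewrite -E (lamM HB) Hq.
Qed.

Lemma lam0x (A : zmodType) (mul : A -> A -> A) inv one :
  is_left_brace mul inv one -> forall z, lam mul 0 z = z.
Proof.
move=> HB z; rewrite /lam oppr0 add0r -(one0 HB); case: HB => _ I _ _; exact: (I z).1.
Qed.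

Lemma lamDx (A : zmodType) (mul : A -> A -> A) inv one :
  is_left_brace mul inv one ->
  (forall x y z, bstar mul (bstar mul x y) z = 0) ->
  forall x y z, lam mul (x + y) z = lam mul x (lam mul y z).
Proof.
move=> HB HK x y z.
have E : mul x y = (x + y) + bstar mul x y.
  by rewrite /bstar !addrA [x + y - x]addrAC subrr add0r addrAC subrr add0r.
have Hq : forall w, lam mul (bstar mul x y) w = w.
  by move=> w; have := HK x y w; rewrite /bstar /lam => /eqP; rewrite subr_eq0 => /eqP.
by rewrite -(lamM HB) E (lamK HB (x + y) Hq).
Qed.

Definition Vs (A : zmodType) (mul : A -> A -> A) (a : A) (m : nat) (c : nat -> int) : A :=
  \sum_(1 <= i < m.+1) aseq mul a i *~ c i.

Definition conv (n : int) (x : nat -> int) (j : nat) : int :=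
  \sum_(0 <= k < j) gbinom n k * x (j - k)%N.

Lemma conv0 n x : conv n x 0 = 0.
Proof. by rewrite /conv big_geq. Qed.

Lemma conv_pascal n x j : conv (n + 1) x j = conv n x j + conv n x j.-1.
Proof.
case: j => [|j]; first by rewrite !conv0 addr0.
rewrite /conv !big_nat_recl //= !gbinom0.
rewrite -addrA; congr (_ + _).
rewrite -big_split /=; apply: eq_bigr => k _.
by rewrite gbinom_pascal subSS mulrDl.
Qed.

Lemma conv_base x j : (0 < j)%N -> conv 0 x j = x j.
Proof.
case: j => [//|j] _; rewrite /conv big_nat_recl //= gbinom0 mul1r subn0.
by rewrite big1 ?addr0 // => k _; rewrite gbinom0S mul0r.
Qed.

Lemma lam_aseq (A : zmodType) (mul : A -> A -> A) a i :
  (0 < i)%N -> lam mul a (aseq mul a i) = aseq mul a i + aseq mul a i.+1.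
Proof.
case: i => [//|i] _.
rewrite [aseq mul a i.+2]/aseq /= -/(aseq mul a i.+1) /bstar -/(lam mul a _).
by rewrite addrC subrK.
Qed.

Lemma aseq_lser (A : zmodType) (mul : A -> A -> A) a j :
  lser mul j.+1 (aseq mul a j.+1).
Proof.
elim: j => [//|j IH].
rewrite [aseq mul a j.+2]/aseq /= -/(aseq mul a j.+1).
move=> P _ _ _ HS; apply: HS; exists a, (aseq mul a j.+1); split => //.
Qed.

Lemma HK_of (A : zmodType) (mul : A -> A -> A) :
  (forall x, rser mul 3 x -> x = 0) -> forall x y z, bstar mul (bstar mul x y) z = 0.
Proof.
move=> H x y z; apply: H => P _ _ _ HS; apply: HS.
exists (bstar mul x y), z; split => //.
move=> Q _ _ _ HQ; apply: HQ; by exists x, y.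
Qed.

Lemma lam_V (A : zmodType) (mul : A -> A -> A) inv one a m (c : nat -> int) :
  is_left_brace mul inv one -> (0 < m)%N -> aseq mul a m.+1 = 0 -> c 0%N = 0 ->
  lam mul a (Vs mul a m c) = Vs mul a m (fun j => c j + c j.-1).
Proof.
move=> HB m0 Ham c0.
rewrite /Vs (lam_sum HB).
rewrite (eq_big_nat _ _ (F2 := fun i => aseq mul a i *~ c i + aseq mul a i.+1 *~ c i)); last first.
  by move=> i /andP [i1 _]; rewrite (lamZ HB) (lam_aseq _ _ i1) mulrzDl.
rewrite [RHS](eq_bigr (fun j => aseq mul a j *~ c j + aseq mul a j *~ c j.-1)); last first.
  by move=> j _ /=; rewrite mulrzDr.
rewrite !big_split /=; congr (_ + _).
rewrite [LHS]big_nat_recr //= Ham mul0rz addr0.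
by rewrite [RHS]big_ltn // c0 mulr0z add0r [RHS]big_add1 /=.
Qed.

Lemma lam_step (A : zmodType) (mul : A -> A -> A) inv one a (n : int) z :
  is_left_brace mul inv one ->
  (forall x y z, bstar mul (bstar mul x y) z = 0) ->
  lam mul (a *~ (n + 1)) z = lam mul a (lam mul (a *~ n) z).
Proof.
by move=> HB HK; rewrite mulrzDr mulr1z addrC (lamDx HB HK).
Qed.

Lemma Fn (A : zmodType) (mul : A -> A -> A) inv one a m :
  is_left_brace mul inv one ->
  (forall x y z, bstar mul (bstar mul x y) z = 0) ->
  (0 < m)%N -> aseq mul a m.+1 = 0 ->
  forall n x, lam mul (a *~ n) (Vs mul a m x) = Vs mul a m (conv n x).
Proof.
move=> HB HK m0 Ham.
have up : forall n x, lam mul a (Vs mul a m (conv n x)) = Vs mul a m (conv (n + 1) x).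
  move=> n x; rewrite (lam_V HB m0 Ham (conv0 n x)).
  by apply: eq_bigr => j _; rewrite conv_pascal.
elim/int_rec => [|n IH|n IH] x.
- rewrite mulr0z (lam0x HB) /Vs; apply: eq_big_nat => i /andP [i1 _].
  by rewrite conv_base.
- rewrite intS addrC (lam_step _ _ _ HB HK) IH; exact: up.
- have E : - n.+1%:Z + 1 = - n%:Z by rewrite intS opprD addrAC subrr add0r.
  have inj : forall u v, lam mul a u = lam mul a v -> u = v.
    move=> u v /(congr1 (lam mul (- a))).
    by rewrite -!(lamDx HB HK) addNr !(lam0x HB).
  apply: inj; rewrite -(lam_step _ _ _ HB HK) E IH.
  by have := up (- n.+1%:Z) x; rewrite E.
Qed.

Lemma lamZK (A : zmodType) (mul : A -> A -> A) inv one q :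
  is_left_brace mul inv one ->
  (forall x y z, bstar mul (bstar mul x y) z = 0) ->
  (forall z, lam mul q z = z) -> forall n z, lam mul (q *~ n) z = z.
Proof.
move=> HB HK Hq.
have P : forall k z, lam mul (q *+ k) z = z.
  elim=> [|k IH] z; first by rewrite mulr0n (lam0x HB).
  by rewrite mulrS (lamDx HB HK) IH Hq.
case=> k z; first exact: P.
rewrite NegzE mulrNz.
by rewrite -{1}(P k.+1 z) -(lamDx HB HK) addNr (lam0x HB).
Qed.

Theorem mainTheorem13 (m : nat) (A : zmodType) (mul : A -> A -> A)
  (inv : A -> A) (one : A) (a : A) (t : nat -> int) :
  (2 <= m)%N ->
  is_left_brace mul inv one ->
  (forall x, rser mul 3 x -> x = 0) ->
  (forall x, lser mul m.+1 x -> x = 0) ->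
  inv (\sum_(1 <= i < m.+1) aseq mul a i *~ t i) =
  \sum_(1 <= j < m.+1)
     aseq mul a j *~ (- \sum_(0 <= k < j) gbinom (- t 1%N) k * t (j - k)%N).
Proof.
move=> m2 HB Hr Hl.
have HK := HK_of Hr.
have m0 : (0 < m)%N by apply: ltnW.
have Ham : aseq mul a m.+1 = 0 by apply: Hl; exact: aseq_lser.
set T := \sum_(1 <= i < m.+1) aseq mul a i *~ t i.
have Krest : forall z, lam mul (\sum_(2 <= i < m.+1) aseq mul a i *~ t i) z = z.
  rewrite big_nat_cond.
  apply: (big_ind (fun q => forall z, lam mul q z = z)).
  - exact: lam0x HB.
  - by move=> x y Hx Hy z; rewrite (lamDx HB HK) Hy Hx.
  move=> i /andP [/andP [i2 _] _].
  apply: (lamZK HB HK).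
  case: i i2 => [|[|i]] // _ z.
  rewrite [aseq mul a i.+2]/aseq /= -/(aseq mul a i.+1).
  by have := HK a (aseq mul a i.+1) z; rewrite /bstar /lam => /eqP; rewrite subr_eq0 => /eqP.
have lamT : forall z, lam mul T z = lam mul (a *~ t 1%N) z.
  by move=> z; rewrite /T big_ltn // (lamK HB _ Krest).
set N := t 1%N.
set s := Vs mul a m (conv (- N) (fun i => - t i)).
have Hs : lam mul (a *~ (- N)) (- T) = s.
  have -> : - T = Vs mul a m (fun i => - t i).
    by rewrite /T /Vs -sumrN; apply: eq_bigr => i _; rewrite mulrNz.
  exact: (Fn HB HK m0 Ham).
have lTs : lam mul T s = - T.
  by rewrite lamT -Hs -(lamDx HB HK) -mulrzDr subrr mulr0z (lam0x HB).
have mTs : mul T s = 0.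
  by move: lTs; rewrite /lam => /(congr1 (fun w => T + w)); rewrite addNKr subrr.
have -> : inv T = s.
  have := mulx0 HB (inv T); rewrite -mTs.
  case: HB => As I Iv _; rewrite As (Iv T).1 (I s).1 => ->.
  by [].
rewrite /s /Vs; apply: eq_bigr => j _; congr (_ *~ _).
by rewrite /conv -sumrN; apply: eq_bigr => k _; rewrite mulrN.
Qed.
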